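(* Let $G=(\mathcal{S},\mathbb{A})$ be a finite directed acyclic graph with a unique initial state $\mathbf{s}_0$ (no incoming edges), and let $\mathcal{X}\subseteq\mathcal{S}$ be the set of terminal states. A complete trajectory is a path $\tau=(\mathbf{s}_0\to\mathbf{s}_1\to\dots\to\mathbf{s}_n)$ in $G$ with $\mathbf{s}_n=\mathbf{x}\in\mathcal{X}$. Let $R:\mathcal{X}\to\mathbb{R}_{\ge 0}$ be the extrinsic reward, let $r:\mathcal{X}\to\mathbb{R}_{\ge 0}$ be a state-based intrinsic reward on terminal states, and let $r(\mathbf{s}\to\mathbf{s}')\ge 0$ be edge-based intrinsic rewards on the edges of $G$. Let $Z>0$, let $F:\mathcal{S}\to\mathbb{R}_{>0}$ be a state flow, let $P_F(\cdot\mid\mathbf{s})$ be a forward policy (a probability distribution over the children of each non-terminal state $\mathbf{s}$), and let $P_B(\cdot\mid\mathbf{s}')$ be a backward policy (a probability distribution over the parents of each state $\mathbf{s}'\neq\mathbf{s}_0$). Define for each complete trajectory $\tau$ $$\mathcal{L}_{\rm GAFlowNet}(\tau)=\Big(\log\Big(Z\prod_{t=0}^{n-1}P_F(\mathbf{s}_{t+1}\mid\mathbf{s}_t)\Big)-\log\Big(\big[R(\mathbf{x})+r(\mathbf{x})\big]\prod_{t=0}^{n-1}\Big[P_B(\mathbf{s}_t\mid\mathbf{s}_{t+1})+\frac{r(\mathbf{s}_t\to\mathbf{s}_{t+1})}{F(\mathbf{s}_{t+1})}\Big]\Big)\Big)^2,$$ and let $P(\mathbf{x})=\sum_{\tau:\,\mathbf{s}_n=\mathbf{x}}\prod_{t=0}^{n-1}P_F(\mathbf{s}_{t+1}\mid\mathbf{s}_t)$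 be the probability that sampling a trajectory from $\mathbf{s}_0$ with the forward policy terminates at $\mathbf{x}$. Suppose that $\mathcal{L}_{\rm GAFlowNet}(\tau)=0$ for all complete trajectories $\tau$, and that $R(\mathbf{x})+r(\mathbf{x})>0$ for all $\mathbf{x}\in\mathcal{X}$. Then, when the edge-based intrinsic rewards $r(\mathbf{s}\to\mathbf{s}')$ converge to $0$ (with $F$ not vanishing): (1) $P(\mathbf{x})=\dfrac{R(\mathbf{x})+r(\mathbf{x})}{\sum_{\mathbf{x}'\in\mathcal{X}}[R(\mathbf{x}')+r(\mathbf{x}')]}$ for every $\mathbf{x}\in\mathcal{X}$; (2) if moreover the state-based intrinsic rewards $r(\mathbf{x})$ converge to $0$, then $P$ is an unbiased sampling distribution, i.e. $P(\mathbf{x})=R(\mathbf{x})/\sum_{\mathbf{x}'\in\mathcal{X}}R(\mathbf{x}')$.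
   Context: This is the setting of Generative Flow Networks (GFlowNets) with intermediate (intrinsic) rewards. The edge-based intrinsic rewards $r(\mathbf{s}\to\mathbf{s}')$ are extra flows attached to transitions, and the state-based intrinsic reward $r(\mathbf{x})$ augments the terminal reward $R(\mathbf{x})$. $Z$ plays the role of the (augmented) total flow. ''Unbiased'' means that terminal states are sampled with probability proportional to the extrinsic reward $R$. *)

(* Defs.v *)
From HB Require Import structures.
From mathcomp Require Import all_boot all_order all_algebra.
From mathcomp Require Import all_classical all_reals all_analysis.
Set Implicit Arguments. Unset Strict Implicit. Unset Printing Implicit Defensive.
Import Order.TTheory GRing.Theory Num.Theory.
Local Open Scope ring_scope.

Section GFN.
Variables (R : realType) (S : finType).

Definition is_terminal (E : rel S) (s : S) : bool := [forall s', ~~ E s s'].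

Definition dag (E : rel S) : Prop := forall s t, E s t -> ~~ connect E t s.

Definition traj_edges (s0 : S) (t : seq S) : seq (S * S) := zip (s0 :: t) t.

Definition complete_traj (E : rel S) (s0 : S) (t : seq S) : bool :=
  path E s0 t && is_terminal E (last s0 t).

(* PF s s' = P_F(s' | s). *)
Definition traj_PF (PF : S -> S -> R) (s0 : S) (t : seq S) : R :=
  \prod_(e <- traj_edges s0 t) PF e.1 e.2.

(* PB s' s = P_B(s | s'); re s s' = r(s -> s'). *)
Definition traj_back (PB re : S -> S -> R) (F : S -> R) (s0 : S) (t : seq S) : R :=
  \prod_(e <- traj_edges s0 t) (PB e.2 e.1 + re e.1 e.2 / F e.2).

Definition elog (x : R) : \bar R := if 0 < x then (ln x)%:E else -oo%E.

Definition gafn_loss (Z : R) (PF PB re : S -> S -> R) (F : S -> R)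
    (Rw r : S -> R) (s0 : S) (t : seq S) : \bar R :=
  let x := last s0 t in
  let d := (elog (Z * traj_PF PF s0 t)
            - elog ((Rw x + r x) * traj_back PB re F s0 t))%E in
  (d * d)%E.

(* Probability that forward sampling from s0 terminates at x: sum over all
   paths from s0 to x (in a DAG every path has fewer than #|S| edges). *)
Definition term_prob (E : rel S) (PF : S -> S -> R) (s0 x : S) : R :=
  \sum_(n < #|S|) \sum_(t : n.-tuple S | path E s0 t && (last s0 t == x))
     traj_PF PF s0 t.

End GFN.

(* Main.v *)
Require Import Defs.
From HB Require Import structures.
From mathcomp Require Import all_boot all_order all_algebra.
From mathcomp Require Import all_classical all_reals all_analysis.
From mathcomp Require Import ring lra.
Import Order.TTheory GRing.Theory Num.Theory.
Import numFieldNormedType.Exports.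
Local Open Scope ring_scope.
Set Implicit Arguments. Unset Strict Implicit. Unset Printing Implicit Defensive.


Section Comb.
Variables (R : realType) (S : finType) (E : rel S) (s0 : S).

Lemma sum_rcons n (P : pred (n.+1.-tuple S)) (F : n.+1.-tuple S -> R) :
  \sum_(u | P u) F u =
  \sum_(p : n.-tuple S * S | P [tuple of rcons p.1 p.2]) F [tuple of rcons p.1 p.2].
Proof.
apply: reindex.
exists (fun u : n.+1.-tuple S => ([tuple of belast (thead u) (behead u)], last (thead u) (behead u))).
- move=> [t y] _ /=.
  have -> : thead [tuple of rcons t y] = head y t.
    by rewrite /thead (tnth_nth y) /=; case: (tval t).
  congr pair; last by case: (tval t) => //= a s; rewrite last_rcons.
  apply: val_inj => /=. by case: (tval t) => //= a s; rewrite belast_rcons.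
- move=> u _ /=. apply: val_inj => /=.
  case: u => [[|a s] hs] //=.
  rewrite /thead (tnth_nth a) /=. by rewrite -lastI.
Qed.

Lemma traj_edges_rcons (a : S) t y :
  traj_edges a (rcons t y) = rcons (traj_edges a t) (last a t, y).
Proof.
elim: t a => [|b t IH] a //=.
by rewrite /traj_edges /= -/(traj_edges b (rcons t y)) IH.
Qed.

Lemma traj_PF_rcons (g : S -> S -> R) (a : S) t y :
  traj_PF g a (rcons t y) = traj_PF g a t * g (last a t) y.
Proof. by rewrite /traj_PF traj_edges_rcons big_rcons. Qed.

Lemma dag_uniq : dag E -> forall x p, path E x p -> uniq (x :: p).
Proof.
move=> hd x p; elim: p x => [|y p IH] x //= /andP[exy hp].
apply/andP; split; last exact: IH. apply/negP => hx.
have := path_connect hp hx. by move/negP: (hd _ _ exy).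
Qed.

Definition fl (g : S -> S -> R) n x :=
  \sum_(t : n.-tuple S | path E s0 t && (last s0 t == x)) traj_PF g s0 t.

Lemma fl0 g x : fl g 0 x = (x == s0)%:R.
Proof.
rewrite /fl big_mkcond (big_pred1 [tuple]) => [|t]; last by rewrite /= [t]tuple0; apply/esym/eqP.
by rewrite /= eq_sym; case: (x == s0); rewrite // /traj_PF /traj_edges big_nil.
Qed.

Lemma flS g n x : fl g n.+1 x = \sum_(y | E y x) fl g n y * g y x.
Proof.
rewrite /fl sum_rcons /=.
under eq_bigl do rewrite rcons_path last_rcons.
under eq_bigr do rewrite traj_PF_rcons.
transitivity (\sum_(t : n.-tuple S | path E s0 t && E (last s0 t) x)
   \sum_(y | y == x) traj_PF g s0 t * g (last s0 t) y).
  rewrite pair_big /=; apply: eq_big => [[t y]|[t y]] //=.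
  by case: eqP => [->|]; rewrite ?andbT ?andbF.
rewrite (eq_bigr (fun t : n.-tuple S => traj_PF g s0 t * g (last s0 t) x)); last by move=> t _; rewrite (big_pred1 x).
rewrite (partition_big (fun t : n.-tuple S => last s0 t) (fun y => E y x)) /=;
  last by move=> t /andP[].
apply: eq_bigr => y eyx; rewrite /fl big_distrl; apply: eq_big => t.
  by case: eqP => [->|]; rewrite ?eyx ?andbT ?andbF.
by move=> /andP[_ /eqP->].
Qed.


Lemma flbig (g : S -> S -> R) (x : S) : dag E -> fl g #|S| x = 0.
Proof.
move=> hd; rewrite /fl big_pred0 // => t; apply/negP => /andP[hp _].
have /card_uniqP := dag_uniq hd hp.
have := max_card (mem (s0 :: t)).
by move=> h1 h2; move: h1; rewrite h2 /= size_tuple ltnn.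
Qed.

Lemma term_prob_rec (g : S -> S -> R) (x : S) : dag E ->
  term_prob E g s0 x = (x == s0)%:R + \sum_(y | E y x) term_prob E g s0 y * g y x.
Proof.
move=> hd.
have -> : term_prob E g s0 x = \sum_(n < #|S|.+1) fl g n x.
  by rewrite big_ord_recr /= flbig // addr0.
rewrite big_ord_recl fl0; congr (_ + _).
under eq_bigr do rewrite flS.
rewrite exchange_big /=; apply: eq_bigr => y _.
by rewrite /term_prob big_distrl.
Qed.

Lemma fwd_sum (PF : S -> S -> R) : dag E ->
  (forall s, ~~ is_terminal E s -> \sum_(s' | E s s') PF s s' = 1) ->
  \sum_(x | is_terminal E x) term_prob E PF s0 x = 1.
Proof.
move=> hd hPF.
have h1 : \sum_x term_prob E PF s0 x =
          1 + \sum_(y | ~~ is_terminal E y) term_prob E PF s0 y.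
  under eq_bigr do rewrite term_prob_rec //.
  rewrite big_split /= (bigD1 s0) //= eqxx big1 ?addr0; last by move=> i /negbTE ->.
  congr (_ + _).
  rewrite (eq_bigr (fun s => \sum_y (if E y s then term_prob E PF s0 y * PF y s else 0)));
    last by move=> s _; rewrite big_mkcond.
  rewrite exchange_big /= [RHS]big_mkcond /=; apply: eq_bigr => y _.
  rewrite -big_mkcond /= -big_distrr /=.
  case: ifP => ht.
    by rewrite hPF ?mulr1.
  rewrite big_pred0 ?mulr0 // => s; apply/negP => hys.
  by move/negbFE/forallP: ht => /(_ s); rewrite hys.
move: h1; rewrite (bigID (fun x => is_terminal E x)) /= => /eqP.
by move/eqP/addIr.
Qed.

Lemma bwd_one (PB : S -> S -> R) : dag E -> (forall s, ~~ E s s0) ->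
  (forall s', s' != s0 -> \sum_(s | E s s') PB s' s = 1) ->
  forall x, term_prob E (fun a b => PB b a) s0 x = 1.
Proof.
move=> hd hs0 hPB x.
have [n] := ubnP #|[set z | connect E z x]|; elim: n x => // n IH x hlt.
rewrite term_prob_rec //.
case: (eqVneq x s0) => [->|hx].
  by rewrite big_pred0 ?addr0 // => y; apply/negbTE.
rewrite add0r -[RHS](hPB x hx); apply: eq_bigr => y hyx.
rewrite IH ?mul1r //.
rewrite ltnS in hlt; apply: (leq_trans _ hlt); apply: proper_card; apply/properP; split.
  apply/fintype.subsetP => z; rewrite !inE => hz.
  by apply: connect_trans hz (connect1 hyx).
exists x; first by rewrite inE connect0.
by rewrite inE; apply: hd.
Qed.
End Comb.


Local Open Scope classical_set_scope.
Local Open Scope ring_scope.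

Section Lim.
Variable (R : realType).

Lemma cvg_sumf (I : finType) (P : pred I) (u : I -> nat -> R) (l : I -> R) :
  (forall i, P i -> u i @ \oo --> l i) ->
  (fun k => \sum_(i | P i) u i k) @ \oo --> \sum_(i | P i) l i.
Proof.
move=> h; apply: cvg_big => //; exact: add_continuous.
Qed.

Lemma cvg_sum0 (I : finType) (P : pred I) (u : I -> nat -> R) :
  (forall i, P i -> u i @ \oo --> 0) ->
  (fun k => \sum_(i | P i) u i k) @ \oo --> 0.
Proof.
move=> h; have := cvg_sumf h; rewrite big1 //.
Qed.

Lemma bnd_null (a u : nat -> R) : (forall k, `|a k| <= 1) -> u @ \oo --> 0 ->
  (fun k => a k * u k) @ \oo --> 0.
Proof.
move=> ha /cvgr0Pnorm_lt hu; apply/cvgr0Pnorm_lt => e e0.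
apply: filterS (hu e e0) => k hk; rewrite normrM.
apply: le_lt_trans hk; rewrite -[X in _ <= X]mul1r; apply: ler_wpM2r => //.
Qed.

Lemma prod_cvg (T : eqType) (l : seq T) (h eps : nat -> T -> R) :
  (forall e, e \in l -> forall k, 0 <= h k e <= 1) ->
  (forall e, e \in l -> forall k, 0 <= eps k e) ->
  (forall e, e \in l -> (fun k => eps k e) @ \oo --> 0) ->
  (fun k => \prod_(e <- l) (h k e + eps k e) - \prod_(e <- l) h k e) @ \oo --> 0.
Proof.
elim: l => [|e l IH] hh he hc.
  under eq_fun do rewrite !big_nil subrr. exact: cvg_cst.
have sub : forall e', e' \in l -> e' \in e :: l by move=> e' he'; rewrite inE he' orbT.
have hD := IH (fun e' he' => hh e' (sub _ he')) (fun e' he' => he e' (sub _ he'))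
  (fun e' he' => hc e' (sub _ he')).
set D := (fun k => _) in hD.
set P := (fun k => \prod_(e0 <- l) h k e0).
have hP : forall k, `|P k| <= 1.
  move=> k; rewrite /P big_seq ger0_norm; last by apply: prodr_ge0 => i hi; case/andP: (hh i (sub _ hi) k).
  by apply: prodr_ile1 => i hi; apply: hh; exact: sub.
have he0 := hc e (mem_head _ _).
have hhe : forall k, `|h k e| <= 1.
  by move=> k; case/andP: (hh e (mem_head _ _) k) => h0 h1; rewrite ger0_norm.
have -> : (fun k => \prod_(e0 <- e :: l) (h k e0 + eps k e0) - \prod_(e0 <- e :: l) h k e0)
  = (fun k => (h k e * D k + eps k e * D k) + P k * eps k e).
  apply/funext => k; rewrite !big_cons /D /P; ring.
rewrite -[0 : R]addr0; apply: cvgD; last exact: bnd_null.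
rewrite -[0 : R]addr0; apply: cvgD; first exact: bnd_null.
by rewrite -[0 : R](mulr0 (0:R)); exact: (cvgM he0 hD).
Qed.
End Lim.


Lemma loss0 (R : realType) (S : finType) (Z : R) (PF PB re : S -> S -> R) (F : S -> R)
    (Rw r : S -> R) (s0 : S) (t : seq S) :
  gafn_loss Z PF PB re F Rw r s0 t = 0%E ->
  Z * traj_PF PF s0 t = (Rw (last s0 t) + r (last s0 t)) * traj_back PB re F s0 t.
Proof.
rewrite /gafn_loss /= => /eqP; rewrite mule_eq0 orbb => /eqP.
rewrite /elog; case: ifP => hu; case: ifP => hv //=.
move/eqP; rewrite -EFinB eqe subr_eq0 => /eqP h.
by apply: ln_inj => //; rewrite posrE.
Qed.


Lemma traj_edges_E (S : finType) (E : rel S) (a : S) t e :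
  path E a t -> e \in traj_edges a t -> E e.1 e.2.
Proof.
elim: t a => [|b t IH] a //= /andP[hab hp].
rewrite /traj_edges /= inE => /orP[/eqP-> //|]; exact: IH.
Qed.


Unset Implicit Arguments. Set Strict Implicit.

Theorem theorem1 (R : realType) (S : finType) (E : rel S) (s0 : S)
  (Rw : S -> R)
  (r : nat -> S -> R) (re : nat -> S -> S -> R)
  (Z : nat -> R) (F : nat -> S -> R) (PF PB : nat -> S -> S -> R) :
  dag E ->
  (forall s, ~~ E s s0) ->
  (forall s, s != s0 -> exists s', E s' s) ->
  (forall x, is_terminal E x -> 0 <= Rw x) ->
  (forall k x, is_terminal E x -> 0 <= r k x) ->
  (forall k s s', E s s' -> 0 <= re k s s') ->
  (forall k, 0 < Z k) ->
  (forall k s, 0 < F k s) ->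
  (forall k s, ~~ is_terminal E s ->
     (forall s', E s s' -> 0 <= PF k s s') /\ \sum_(s' | E s s') PF k s s' = 1) ->
  (forall k s', s' != s0 ->
     (forall s, E s s' -> 0 <= PB k s' s) /\ \sum_(s | E s s') PB k s' s = 1) ->
  (forall k (t : seq S), complete_traj E s0 t ->
     gafn_loss (Z k) (PF k) (PB k) (re k) (F k) Rw (r k) s0 t = 0%E) ->
  (forall k x, is_terminal E x -> 0 < Rw x + r k x) ->
  (* edge-based intrinsic rewards converge to 0, with F not vanishing *)
  (forall s s', E s s' -> (fun k => re k s s') @ \oo --> (0 : R)) ->
  (exists2 c : R, 0 < c & forall k s, c <= F k s) ->
  (* (1) *)
  (forall x, is_terminal E x ->
     (fun k => term_prob E (PF k) s0 x
               - (Rw x + r k x) / \sum_(x' | is_terminal E x') (Rw x' + r k x'))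
       @ \oo --> (0 : R)) /\
  (* (2) *)
  ((forall x, is_terminal E x -> (fun k => r k x) @ \oo --> (0 : R)) ->
   0 < \sum_(x' | is_terminal E x') Rw x' ->
   forall x, is_terminal E x ->
     (fun k => term_prob E (PF k) s0 x)
       @ \oo --> (Rw x / \sum_(x' | is_terminal E x') Rw x')).
Proof.
move=> hd hs0 hpar hRw hr hre hZ hF hPF hPB hloss hpos hrecvg [c c0 hc].
pose a k y := Rw y + r k y.
pose A k := \sum_(y | is_terminal E y) a k y.
pose gb k := fun u v => PB k v u + re k u v / F k v.
pose B k y := term_prob E (gb k) s0 y.
pose T k y := term_prob E (PF k) s0 y.
have haA : forall k x, is_terminal E x -> 0 < a k x <= A k.
  move=> k x hx; rewrite hpos //= /A (bigD1 x) //= lerDl.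
  by apply: sumr_ge0 => i /andP[hi _]; exact: ltW (hpos k i hi).
have hApos : forall k x, is_terminal E x -> 0 < A k.
  by move=> k x hx; case/andP: (haA k x hx) => h1 h2; exact: lt_le_trans h1 h2.
have hZT : forall k y, is_terminal E y -> Z k * T k y = a k y * B k y.
  move=> k y hy; rewrite /T /B /term_prob !mulr_sumr; apply: eq_bigr => n _.
  rewrite !mulr_sumr; apply: eq_bigr => t /andP[hp /eqP hl].
  have := hloss k t; rewrite /complete_traj hp hl hy => /(_ isT) /loss0.
  by rewrite hl.
have hT1 : forall k, \sum_(y | is_terminal E y) T k y = 1.
  by move=> k; apply: (fwd_sum s0 hd) => s hs; exact: (hPF k s hs).2.
have hZeq : forall k, Z k = \sum_(y | is_terminal E y) a k y * B k y.
  move=> k; rewrite -[Z k]mulr1 -(hT1 k) mulr_sumr; apply: eq_bigr => y hy.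
  by rewrite hZT.
have hB1 : forall y, (fun k => B k y - 1) @ \oo --> 0.
  move=> y.
  have hV : forall k, term_prob E (fun u v => PB k v u) s0 y = 1.
    by move=> k; apply: (bwd_one hd hs0) => s' hs'; exact: (hPB k s' hs').2.
  have -> : (fun k => B k y - 1) = (fun k => \sum_(n < #|S|)
      \sum_(t : n.-tuple S | path E s0 t && (last s0 t == y))
        (traj_PF (gb k) s0 t - traj_PF (fun u v => PB k v u) s0 t)).
    apply/funext => k; rewrite -(hV k) /B /term_prob -sumrB.
    by apply: eq_bigr => n _; rewrite -sumrB.
  apply: cvg_sum0 => n _; apply: cvg_sum0 => t /andP[hp _].
  apply: (@prod_cvg _ _ _ (fun k e => PB k e.2 e.1) (fun k e => re k e.1 e.2 / F k e.2))
    => e he; have hE := traj_edges_E hp he.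
  - have hne : e.2 != s0 by apply/eqP => h; move: (hs0 e.1); rewrite -h hE.
    move=> k; have [h0 h1] := hPB k e.2 hne.
    rewrite h0 //= -h1 (bigD1 e.1) //= lerDl.
    by apply: sumr_ge0 => i /andP[hi _]; exact: h0.
  - by move=> k; apply: divr_ge0; [exact: hre | exact: ltW].
  - apply: (@squeeze_cvgr _ _ _ _ (fun _ => 0) (fun k => re k e.1 e.2 / c)).
    + apply: nearW => k; rewrite divr_ge0 ?hre ?(ltW (hF _ _)) //=.
      apply: ler_wpM2l; first exact: hre.
      by rewrite lef_pV2 ?posrE ?hF.
    + exact: cvg_cst.
    + by rewrite -(mul0r c^-1); apply: cvgMr_tmp; exact: hrecvg.
have part1 : forall x, is_terminal E x -> (fun k => T k x - a k x / A k) @ \oo --> 0.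
  move=> x hx.
  pose w k y := a k y / A k.
  pose D k := \sum_(y | is_terminal E y) w k y * B k y.
  have hw : forall k y, is_terminal E y -> 0 <= w k y <= 1.
    move=> k y hy; case/andP: (haA k y hy) => h1 h2.
    rewrite divr_ge0 ?(ltW h1) ?(ltW (hApos k y hy)) //=.
    by rewrite ler_pdivrMr ?mul1r //; exact: hApos k y hy.
  have hwn : forall k y, is_terminal E y -> `|w k y| <= 1.
    by move=> k y hy; case/andP: (hw k y hy) => h0 h1; rewrite ger0_norm.
  have hD1 : (fun k => D k - 1) @ \oo --> 0.
    have -> : (fun k => D k - 1) =
        (fun k => \sum_(y | is_terminal E y) w k y * (B k y - 1)).
      apply/funext => k; rewrite /D.
      have hs : \sum_(y | is_terminal E y) w k y = 1.
        by rewrite /w -mulr_suml divff // gt_eqF // (hApos k x hx).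
      by rewrite -[in X in _ - X]hs -sumrB; apply: eq_bigr => y _; rewrite mulrBr mulr1.
    apply: cvg_sum0 => y hy; apply: bnd_null; [by move=> k; exact: hwn | exact: hB1].
  have hDc : D @ \oo --> (1:R).
    have -> : D = (fun k => (D k - 1) + 1) by apply/funext => k; rewrite subrK.
    have := cvgD hD1 (cvg_cst (1:R)); rewrite add0r; exact.
  have hDinv : (fun k => (D k)^-1) @ \oo --> (1:R).
    have := cvgV (oner_neq0 R) hDc; rewrite invr1; exact.
  have key : forall k, T k x - a k x / A k =
      (w k x * ((B k x - 1) - (D k - 1))) * (D k)^-1.
    move=> k.
    have hA0 : A k != 0 by rewrite gt_eqF // (hApos k x hx).
    have hZD : Z k = A k * D k.
      rewrite hZeq /D /w mulr_sumr; apply: eq_bigr => y _; field; exact: hA0.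
    have hD0 : D k != 0.
      by apply/eqP => h; move: (hZ k); rewrite hZD h mulr0 ltxx.
    have hT : T k x = a k x * B k x / Z k.
      by rewrite -hZT // mulrC mulrA mulVf ?mul1r // gt_eqF.
    rewrite hT hZD /w; field; apply/andP; split => //.
  rewrite (funext key) -[X in _ --> X](mul0r (1:R)).
  apply: cvgM; last exact: hDinv.
  apply: bnd_null; first by move=> k; exact: hwn.
  by rewrite -(subrr (0:R)); apply: cvgB; [exact: hB1 | exact: hD1].
split; first exact: part1.
move=> hr0 hRpos x hx.
have ha : forall y, is_terminal E y -> (fun k => a k y) @ \oo --> Rw y.
  move=> y hy; rewrite -[Rw y]addr0; apply: cvgD; [exact: cvg_cst | exact: hr0].
have hA : A @ \oo --> \sum_(y | is_terminal E y) Rw y.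
  by apply: cvg_sumf => y hy; exact: ha.
have hw : (fun k => a k x / A k) @ \oo --> Rw x / \sum_(y | is_terminal E y) Rw y.
  by apply: cvgM; [exact: ha | apply: cvgV => //; rewrite gt_eqF].
have -> : (fun k => term_prob E (PF k) s0 x) =
    (fun k => (T k x - a k x / A k) + a k x / A k) by apply/funext => k; rewrite subrK.
rewrite -[X in _ --> X]add0r; apply: cvgD; [exact: part1 | exact: hw].
Qed.
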